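(* Let $A\subset\mathbb{R}^m$ be a set-germ at $0$ with $0\in\overline{A}$ and $B\subset\mathbb{R}^n$ a set-germ at $0$ with $0\in\overline{B}$. Then $A$ satisfies condition (SSP) at $0\in\mathbb{R}^m$ and $B$ satisfies condition (SSP) at $0\in\mathbb{R}^n$ if and only if $A\times B$ satisfies condition (SSP) at $(0,0)\in\mathbb{R}^m\times\mathbb{R}^n$.
   Context: For a set-germ $A\subset\mathbb{R}^k$ at $0$ with $0\in\overline A$, $D(A)=\{a\in S^{k-1}:\exists\, x_i\in A\setminus\{0\},\ x_i\to0,\ x_i/\|x_i\|\to a\}$. For sequences, $\|u_m\|\ll\|v_m\|,\|w_m\|$ means $\|u_m\|/\|v_m\|\to0$ and $\|u_m\|/\|w_m\|\to0$. $A$ satisfies condition (SSP) at $0$ if for every sequence $a_m\in\mathbb{R}^k$ tending to $0$ with $\lim a_m/\|a_m\|\in D(A)$ there is a sequence $b_m\in A$ with $\|a_m-b_m\|\ll\|a_m\|,\|b_m\|$. *)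

(* Defs.v *)
From HB Require Import structures.
From mathcomp Require Import all_boot all_order all_algebra.
From mathcomp Require Import all_classical all_reals all_analysis.
Set Implicit Arguments. Unset Strict Implicit. Unset Printing Implicit Defensive.
Import Order.TTheory GRing.Theory Num.Theory.
Import numFieldNormedType.Exports.
Local Open Scope classical_set_scope.
Local Open Scope ring_scope.

(* R^k is modelled as row vectors 'rV[R]_k, with the Euclidean norm. *)
Definition enorm {R : realType} {k : nat} (v : 'rV[R]_k) : R :=
  Num.sqrt (\sum_(i < k) v ord0 i ^+ 2).

Definition unitv {R : realType} {k : nat} (v : 'rV[R]_k) : 'rV[R]_k :=
  (enorm v)^-1 *: v.

Definition Dset {R : realType} {k : nat} (A : set 'rV[R]_k) : set 'rV[R]_k :=
  [set a : 'rV[R]_k | exists x : nat -> 'rV[R]_k,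
     (forall i, A (x i) /\ x i != 0) /\
     x @ \oo --> (0 : 'rV[R]_k) /\ (fun i => unitv (x i)) @ \oo --> a].

(* u_m << v_m :  |u_m| / |v_m| -> 0, stated without division:
   for every eps > 0, eventually |u_m| <= eps |v_m|. *)
Definition negl {R : realType} (u v : nat -> R) : Prop :=
  forall eps : R, 0 < eps -> \forall m \near \oo, u m <= eps * v m.

Definition SSP {R : realType} {k : nat} (A : set 'rV[R]_k) : Prop :=
  forall a : nat -> 'rV[R]_k,
    (forall i, a i != 0) -> a @ \oo --> (0 : 'rV[R]_k) ->
    (exists d : 'rV[R]_k, Dset A d /\ (fun i => unitv (a i)) @ \oo --> d) ->
    exists b : nat -> 'rV[R]_k, (forall i, A (b i)) /\
      negl (fun i => enorm (a i - b i)) (fun i => enorm (a i)) /\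
      negl (fun i => enorm (a i - b i)) (fun i => enorm (b i)).

Definition prodset {R : realType} {m n : nat}
  (A : set 'rV[R]_m) (B : set 'rV[R]_n) : set 'rV[R]_(m + n) :=
  [set row_mx x y | x in A & y in B].

(* Main.v *)
Require Import Defs.
From HB Require Import structures.
From mathcomp Require Import all_boot all_order all_algebra.
From mathcomp Require Import all_classical all_reals all_analysis.
From mathcomp Require Import ring lra.
Import Order.TTheory GRing.Theory Num.Theory.
Import numFieldNormedType.Exports.
Local Open Scope classical_set_scope.
Local Open Scope ring_scope.

Set Implicit Arguments. Unset Strict Implicit. Unset Printing Implicit Defensive.
Section Norms.
Variable R : realType.

Definition sq {k} (v : 'rV[R]_k) := \sum_(i < k) v ord0 i ^+ 2.
Definition dot {k} (u v : 'rV[R]_k) := \sum_(i < k) u ord0 i * v ord0 i.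

Lemma sq_ge0 k (v : 'rV[R]_k) : 0 <= sq v.
Proof. by apply: sumr_ge0 => i _; exact: sqr_ge0. Qed.

Lemma enormE k (v : 'rV[R]_k) : enorm v = Num.sqrt (sq v).
Proof. by []. Qed.

Lemma enorm_ge0 k (v : 'rV[R]_k) : 0 <= enorm v.
Proof. exact: sqrtr_ge0. Qed.

Lemma enorm_sq k (v : 'rV[R]_k) : enorm v ^+ 2 = sq v.
Proof. by rewrite enormE sqr_sqrtr // sq_ge0. Qed.

Lemma enorm0 k : enorm (0 : 'rV[R]_k) = 0.
Proof.
rewrite enormE /sq big1 ?sqrtr0 // => i _; by rewrite mxE expr0n.
Qed.

Lemma enorm_eq0 k (v : 'rV[R]_k) : enorm v = 0 -> v = 0.
Proof.
move=> /eqP; rewrite enormE sqrtr_eq0 => h.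
have h0 : sq v = 0 by apply/eqP; rewrite eq_le h sq_ge0.
apply/rowP => i; rewrite mxE.
have := psumr_eq0P (fun i _ => sqr_ge0 (v ord0 i)) h0 (i:=i) isT.
by move/eqP; rewrite sqrf_eq0 => /eqP.
Qed.

Lemma enorm_gt0 k (v : 'rV[R]_k) : v != 0 -> 0 < enorm v.
Proof.
move=> hv; rewrite lt_neqAle enorm_ge0 andbT eq_sym; apply/eqP => /enorm_eq0 h.
by rewrite h eqxx in hv.
Qed.

Lemma sqZ k c (v : 'rV[R]_k) : sq (c *: v) = c ^+ 2 * sq v.
Proof.
rewrite /sq mulr_sumr; apply: eq_bigr => i _; by rewrite mxE exprMn.
Qed.

Lemma enormZ k c (v : 'rV[R]_k) : enorm (c *: v) = `|c| * enorm v.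
Proof. by rewrite !enormE sqZ sqrtrM ?sqr_ge0 // sqrtr_sqr. Qed.

Lemma enormN k (v : 'rV[R]_k) : enorm (- v) = enorm v.
Proof. by rewrite -scaleN1r enormZ normrN normr1 mul1r. Qed.

Lemma enormB k (u v : 'rV[R]_k) : enorm (u - v) = enorm (v - u).
Proof. by rewrite -enormN opprB. Qed.

Lemma sqD k (u v : 'rV[R]_k) : sq (u + v) = sq u + 2 * dot u v + sq v.
Proof.
rewrite /sq /dot mulr_sumr -!big_split /=; apply: eq_bigr => i _.
rewrite mxE; ring.
Qed.

Lemma dot_sum k (u v : 'rV[R]_k) a b :
  0 <= sq (b *: u - a *: v).
Proof. exact: sq_ge0. Qed.

Lemma CS k (u v : 'rV[R]_k) : dot u v <= enorm u * enorm v.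
Proof.
have [/enorm_eq0 -> | ua] := eqVneq (enorm u) 0.
  by rewrite /dot enorm0 mul0r big1 // => i _; rewrite mxE mul0r.
have [/enorm_eq0 -> | va] := eqVneq (enorm v) 0.
  by rewrite /dot enorm0 mulr0 big1 // => i _; rewrite mxE mulr0.
set a := enorm u; set b := enorm v.
have a0 : 0 < a by rewrite lt_neqAle eq_sym ua enorm_ge0.
have b0 : 0 < b by rewrite lt_neqAle eq_sym va enorm_ge0.
have h := sq_ge0 (b *: u - a *: v).
have e : sq (b *: u - a *: v) = b ^+ 2 * a ^+ 2 - 2 * a * b * dot u v + a ^+ 2 * b ^+ 2.
  rewrite -scaleNr sqD !sqZ -!enorm_sq -/a -/b.
  rewrite /dot mulr_sumr mulr_sumr -sumrN; congr (_ + _ + _).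
    by apply: eq_bigr => i _; rewrite !mxE; ring.
  by rewrite sqrrN.
rewrite e in h.
have hab : 0 < a * b by rewrite mulr_gt0.
nra.
Qed.

Lemma enormD k (u v : 'rV[R]_k) : enorm (u + v) <= enorm u + enorm v.
Proof.
rewrite [X in X <= _]enormE -(ger0_norm (addr_ge0 (enorm_ge0 u) (enorm_ge0 v))).
rewrite -sqrtr_sqr ler_sqrt ?sqr_ge0 // sqD sqrrD -!enorm_sq.
have := CS u v; lra.
Qed.

Lemma enorm_diff k (u v : 'rV[R]_k) : `|enorm u - enorm v| <= enorm (u - v).
Proof.
rewrite ler_norml; apply/andP; split.
  have := enormD (v - u) u; rewrite subrK enormB; lra.
have := enormD (u - v) v; rewrite subrK; lra.
Qed.

Lemma sq_row m n (x : 'rV[R]_m) (y : 'rV[R]_n) : sq (row_mx x y) = sq x + sq y.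
Proof. by rewrite /sq big_split_ord /=; congr (_ + _); apply: eq_bigr => i _;
  rewrite ?row_mxEl ?row_mxEr. Qed.

Lemma mxnorm_le k (v : 'rV[R]_k) : `|v| <= enorm v.
Proof.
rewrite [leLHS]/Num.Def.normr /= mx_normrE; apply: bigmax_le => [|[i j] _]; first exact: enorm_ge0.
rewrite /= (ord1 i) -sqrtr_sqr enormE ler_sqrt ?sq_ge0 //.
by rewrite /sq (bigD1 j) //= lerDl sumr_ge0 // => l _; exact: sqr_ge0.
Qed.

Lemma coord_le k (v : 'rV[R]_k) j : `|v ord0 j| <= `|v|.
Proof.
by rewrite [leRHS]/Num.Def.normr /= mx_normrE; apply/bigmax_geP; right => /=; exists (ord0, j).
Qed.

Lemma enorm_le_mx k (v : 'rV[R]_k) : enorm v <= k.+1%:R * `|v|.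
Proof.
have M0 : 0 <= `|v| by [].
rewrite enormE -(ger0_norm (mulr_ge0 (ler0n _ k.+1) M0)) -sqrtr_sqr ler_sqrt ?sqr_ge0 //.
apply: (@le_trans _ _ (\sum_(i < k) `|v| ^+ 2)).
  apply: ler_sum => i _; rewrite -real_normK ?num_real //.
  by rewrite lerXn2r ?nnegrE ?normr_ge0 // coord_le.
rewrite sumr_const card_ord -mulr_natr exprMn.
have hk : (k%:R : R) <= k.+1%:R ^+ 2.
  rewrite -natrX ler_nat; apply: (@leq_trans k.+1) => //; rewrite expnS leq_pmulr //.
have := sqr_ge0 `|v|; nra.
Qed.

End Norms.


Section Anal.
Variable R : realType.

Definition cv k (u : nat -> 'rV[R]_k) l :=
  forall eps, 0 < eps -> \forall i \near \oo, enorm (u i - l) <= eps.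

Lemma cvE k (u : nat -> 'rV[R]_k) l : u @ \oo --> l <-> cv u l.
Proof.
split.
  move=> /cvgrPdistC_le h eps eps0.
  have := h (eps / k.+1%:R) (divr_gt0 eps0 (ltr0Sn _ _)).
  apply: filterS => i hi.
  apply: le_trans (enorm_le_mx _) _.
  by rewrite -ler_pdivlMl ?ltr0Sn // mulrC.
move=> h; apply/cvgrPdistC_le => eps eps0.
by apply: filterS (h _ eps0) => i; apply: le_trans; exact: mxnorm_le.
Qed.

Lemma cv_near k (u v : nat -> 'rV[R]_k) l :
  (\forall i \near \oo, u i = v i) -> cv u l -> cv v l.
Proof.
move=> he hu eps eps0; apply: filterS2 he (hu _ eps0) => i ->. done.
Qed.

Lemma cv_enorm k (u : nat -> 'rV[R]_k) l :
  cv u l -> (fun i => enorm (u i)) @ \oo --> enorm l.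
Proof.
move=> h; apply/cvgrPdist_le => eps eps0.
apply: filterS (h _ eps0) => i hi.
by apply: le_trans (enorm_diff _ _) _; rewrite enormB.
Qed.

Lemma unitvZ k c (v : 'rV[R]_k) : 0 < c -> unitv (c *: v) = unitv v.
Proof.
move=> c0; rewrite /unitv enormZ gtr0_norm // scalerA invfM mulrAC mulVf ?mul1r //.
by rewrite gt_eqF.
Qed.

Lemma unitv_cv k (w : nat -> 'rV[R]_k) e :
  cv w e -> e != 0 -> cv (fun i => unitv (w i)) (unitv e).
Proof.
move=> h e0; apply/cvE; rewrite /unitv.
apply: cvgZ; last exact/cvE.
apply: (@cvgV _ _ _ _ (fun i => enorm (w i))); last exact: cv_enorm.
by rewrite gt_eqF // enorm_gt0.
Qed.

Lemma coreK k (s : nat -> R) (x : nat -> 'rV[R]_k) e :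
  (forall i, 0 < s i) -> s @ \oo --> 0 ->
  cv (fun i => (s i)^-1 *: x i) e -> e != 0 ->
  [/\ \forall i \near \oo, x i != 0, cv x 0,
      cv (fun i => unitv (x i)) (unitv e) &
      \forall i \near \oo, enorm (x i) <= (enorm e + 1) * s i].
Proof.
move=> s0 /cvgrPdist_le hs hw e0.
have ep : 0 < enorm e by exact: enorm_gt0.
have xE i : x i = s i *: ((s i)^-1 *: x i).
  by rewrite scalerA mulfV ?scale1r // gt_eqF.
have hd : \forall i \near \oo, enorm (x i) <= (enorm e + 1) * s i.
  apply: filterS (hw _ ltr01) => i hi.
  rewrite {1}xE enormZ gtr0_norm // mulrC ler_wpM2r ?(ltW (s0 i)) //.
  have := enormD ((s i)^-1 *: x i - e) e; rewrite subrK; lra.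
split => //.
- apply: filterS (hw _ (divr_gt0 ep (ltr0Sn _ 1))) => i hi; apply/eqP => xi.
  move: hi; rewrite xi scaler0 sub0r enormN; lra.
- move=> eps eps0.
  have e1 : 0 < enorm e + 1 by lra.
  apply: filterS2 hd (hs _ (divr_gt0 eps0 e1)) => i h1 h2.
  rewrite subr0; apply: le_trans h1 _.
  move: h2; rewrite sub0r normrN gtr0_norm // => h2.
  by rewrite mulrC -ler_pdivlMr.
- have := unitv_cv hw e0; apply: cv_near; apply: nearW => i.
  by rewrite unitvZ // invr_gt0.
Qed.

Lemma Dlemma k (A : set 'rV[R]_k) (s : nat -> R) (x : nat -> 'rV[R]_k) e :
  (forall i, A (x i)) ->
  (forall i, 0 < s i) -> s @ \oo --> 0 ->
  cv (fun i => (s i)^-1 *: x i) e -> e != 0 -> Dset A (unitv e).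
Proof.
move=> Ax s0 s00 hw e0; have [h1 h2 h3 _] := coreK s0 s00 hw e0.
have [i0 hi0] := filter_ex h1.
pose x' i := if x i == 0 then x i0 else x i.
have near' : \forall i \near \oo, x i = x' i.
  by apply: filterS h1 => i; rewrite /x' => /negPf ->.
exists x'; split; [|split].
- by move=> i; rewrite /x'; case: eqP => [_|/eqP]; split => //; exact: Ax.
- by apply/cvE; exact: cv_near near' h2.
- apply/cvE; apply: cv_near h3; apply: filterS near' => i -> //.
Qed.

End Anal.

Section Comp.
Variable R : realType.

Lemma closure_small k (A : set 'rV[R]_k) r :
  closure A 0 -> 0 < r -> exists b, A b /\ enorm b <= r.
Proof.
move=> cA r0.
have r'0 : 0 < r / k.+1%:R by rewrite divr_gt0 // ltr0Sn.
have [b [Ab hb]] := cA _ (nbhsx_ballx 0 _ r'0).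
exists b; split => //.
move: hb; rewrite -ball_normE /ball_ /= sub0r normrN => hb.
apply: le_trans (enorm_le_mx _) _.
by rewrite mulrC -ler_pdivlMr ?ltr0Sn // ltW.
Qed.

Lemma Wk k (P : set 'rV[R]_k) (a b : nat -> 'rV[R]_k) :
  (forall i, P (b i)) ->
  negl (fun i => enorm (a i - b i)) (fun i => enorm (a i)) ->
  exists b, (forall i, P (b i)) /\
      negl (fun i => enorm (a i - b i)) (fun i => enorm (a i)) /\
      negl (fun i => enorm (a i - b i)) (fun i => enorm (b i)).
Proof.
move=> Pb h; exists b; split => //; split => // eps eps0.
have e1 : 0 < 1 + eps by lra.
have e'0 : 0 < eps / (1 + eps) by exact: divr_gt0.
apply: filterS (h _ e'0) => i hi.
have ht := enormD (b i) (a i - b i); rewrite addrC subrK in ht.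
set x := enorm (a i - b i) in hi ht *; set y := enorm (b i) in ht *.
set z := enorm (a i) in hi ht *.
have he : eps / (1 + eps) * (1 + eps) = eps by rewrite divfK // gt_eqF.
have x0 : 0 <= x by exact: enorm_ge0.
set e' := eps / (1 + eps) in he e'0 hi.
have h2 : x <= e' * (y + x) by apply: le_trans hi _; rewrite ler_wpM2l // ltW.
nra.
Qed.

Lemma compL k (A : set 'rV[R]_k) (s : nat -> R) (a : nat -> 'rV[R]_k) e :
  SSP A -> closure A 0 ->
  (forall i, 0 < s i) -> s @ \oo --> 0 ->
  cv (fun i => (s i)^-1 *: a i) e -> (e != 0 -> Dset A (unitv e)) ->
  exists b, (forall i, A (b i)) /\ negl (fun i => enorm (a i - b i)) s.
Proof.
move=> sA cA s0 s00 hw De.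
have sE i : enorm (a i) = s i * enorm ((s i)^-1 *: a i).
  by rewrite enormZ gtr0_norm ?invr_gt0 // mulrA mulfV ?mul1r // gt_eqF.
have [e00 | e0] := eqVneq e 0.
  subst e.
  have hb i : exists b, A b /\ enorm b <= s i ^+ 2.
    by apply: closure_small => //; rewrite exprn_gt0.
  have [b hb'] := choice hb.
  exists b; split => [i|eps eps0]; first by case: (hb' i).
  have e2 : 0 < eps / 2 by rewrite divr_gt0.
  move/cvgrPdist_le: s00 => s00.
  apply: filterS2 (hw _ e2) (s00 _ e2) => i h1 h2.
  move: h1 h2; rewrite subr0 sub0r normrN gtr0_norm // => h1 h2.
  have hbi := proj2 (hb' i).
  have := enormD (a i) (- b i); rewrite enormN sE => h3.
  apply: le_trans h3 _.
  have si := s0 i.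
  have hn := enorm_ge0 ((s i)^-1 *: a i).
  nra.
have [h1 h2 h3 h4] := coreK s0 s00 hw e0.
pose a' i := if a i == 0 then e else a i.
have near' : \forall i \near \oo, a i = a' i.
  by apply: filterS h1 => i; rewrite /a' => /negPf ->.
have [b [Ab [hb _]]] : exists b, (forall i, A (b i)) /\
      negl (fun i => enorm (a' i - b i)) (fun i => enorm (a' i)) /\
      negl (fun i => enorm (a' i - b i)) (fun i => enorm (b i)).
  apply: sA.
  - by move=> i; rewrite /a'; case: ifP => // /negbT.
  - by apply/cvE; exact: cv_near near' h2.
  - exists (unitv e); split; first exact: De.
    by apply/cvE; apply: cv_near h3; apply: filterS near' => i ->.
exists b; split => // eps eps0.
have ep := enorm_ge0 e.
have e1 : 0 < enorm e + 1 by lra.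
apply: filterS3 near' h4 (hb _ (divr_gt0 eps0 e1)) => i -> h5 h6.
apply: le_trans h6 _.
have hq : eps / (enorm e + 1) * ((enorm e + 1) * s i) = eps * s i.
  by rewrite mulrA divfK // gt_eqF.
rewrite -hq; apply: ler_wpM2l => //; exact: ltW (divr_gt0 eps0 e1).
Qed.

End Comp.

Section Pair.
Variable R : realType.
Variables m n p : nat.
Variable f : 'rV[R]_m -> 'rV[R]_n -> 'rV[R]_p.
Hypothesis fB : forall x y x' y', f x y - f x' y' = f (x - x') (y - y').
Hypothesis fZ : forall c x y, c *: f x y = f (c *: x) (c *: y).
Hypothesis fsq : forall x y, sq (f x y) = sq x + sq y.

Lemma f00 : f 0 0 = 0.
Proof. by rewrite -(subrr (0 : 'rV_m)) -(subrr (0 : 'rV_n)) -fB subrr. Qed.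

Lemma f_le1 x y : enorm x <= enorm (f x y).
Proof. by rewrite !enormE ler_sqrt ?sq_ge0 // fsq lerDl sq_ge0. Qed.

Lemma f_le2 x y : enorm y <= enorm (f x y).
Proof. by rewrite !enormE ler_sqrt ?sq_ge0 // fsq lerDr sq_ge0. Qed.

Lemma f_ge x y : enorm (f x y) <= enorm x + enorm y.
Proof.
rewrite [leLHS]enormE -(ger0_norm (addr_ge0 (enorm_ge0 x) (enorm_ge0 y))).
rewrite -sqrtr_sqr ler_sqrt ?sqr_ge0 // fsq sqrrD -!enorm_sq.
have := mulr_ge0 (enorm_ge0 x) (enorm_ge0 y); lra.
Qed.

Lemma sq0 k : sq (0 : 'rV[R]_k) = 0.
Proof. by rewrite /sq big1 // => i _; rewrite mxE expr0n. Qed.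

Lemma f_x0 x : enorm (f x 0) = enorm x.
Proof. by rewrite !enormE fsq sq0 addr0. Qed.

Lemma cv_f1 (u : nat -> 'rV_m) (v : nat -> 'rV_n) l l' :
  cv (fun i => f (u i) (v i)) (f l l') -> cv u l.
Proof.
move=> h eps eps0; apply: filterS (h _ eps0) => i; rewrite fB.
exact: le_trans (f_le1 _ _).
Qed.

Lemma cv_f2 (u : nat -> 'rV_m) (v : nat -> 'rV_n) l l' :
  cv (fun i => f (u i) (v i)) (f l l') -> cv v l'.
Proof.
move=> h eps eps0; apply: filterS (h _ eps0) => i; rewrite fB.
exact: le_trans (f_le2 _ _).
Qed.

Lemma cv_f (u : nat -> 'rV_m) (v : nat -> 'rV_n) l l' :
  cv u l -> cv v l' -> cv (fun i => f (u i) (v i)) (f l l').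
Proof.
move=> h1 h2 eps eps0.
have e2 : 0 < eps / 2 by rewrite divr_gt0.
apply: filterS2 (h1 _ e2) (h2 _ e2) => i a b; rewrite fB.
apply: le_trans (f_ge _ _) _; lra.
Qed.

Lemma cv_const k (l : 'rV[R]_k) : cv (fun _ => l) l.
Proof. by move=> eps eps0; apply: nearW => i; rewrite subrr enorm0 ltW. Qed.


Lemma back (A : set 'rV[R]_m) (B : set 'rV[R]_n) (P : set 'rV[R]_p) :
  (forall z, P z <-> exists x y, [/\ A x, B y & z = f x y]) ->
  closure B 0 -> SSP P -> SSP A.
Proof.
move=> HP cB sP a a0 a00 [d [[x [hx [x0 hxd]]] had]].
have xn i : 0 < enorm (x i) by apply: enorm_gt0; case: (hx i).
have hy i : exists y, B y /\ enorm y <= enorm (x i) ^+ 2.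
  by apply: closure_small => //; rewrite exprn_gt0.
have [y hy'] := choice hy.
have yle i : enorm (y i) <= enorm (x i) ^+ 2 by case: (hy' i).
pose z i := f (x i) (y i).
have zge i : enorm (x i) <= enorm (z i) by exact: f_le1.
have zle i : enorm (z i) <= enorm (x i) + enorm (x i) ^+ 2.
  by apply: le_trans (f_ge _ _) _; rewrite lerD2l.
have zn i : 0 < enorm (z i) by apply: lt_le_trans (zge i).
move/cvE: (x0) => x0'.
have Dz : Dset P (f d 0).
  exists z; split; [|split].
  - move=> i; split.
      by apply/HP; exists (x i), (y i); split => //; [case: (hx i)|case: (hy' i)].
    by apply/eqP => z0; have := zn i; rewrite z0 enorm0 ltxx.
  - apply/cvE => eps eps0.
    have e2 : 0 < eps / 2 by rewrite divr_gt0.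
    apply: filterS2 (x0' _ e2) (x0' _ ltr01) => i h1 h2.
    move: h1 h2; rewrite !subr0 => h1 h2.
    apply: le_trans (zle i) _.
    have := enorm_ge0 (x i); nra.
  - apply/cvE.
    have zE i : unitv (z i) = f ((enorm (z i))^-1 *: x i) ((enorm (z i))^-1 *: y i).
      by rewrite /unitv fZ.
    suff hh : cv (fun i => f ((enorm (z i))^-1 *: x i) ((enorm (z i))^-1 *: y i)) (f d 0).
      by apply: cv_near hh; apply: nearW => i; rewrite zE.
    apply: cv_f.
    + have rE i : (enorm (z i))^-1 *: x i = (enorm (x i) / enorm (z i)) *: unitv (x i).
        by rewrite /unitv scalerA mulrAC mulfV ?mul1r // gt_eqF.
      suff hh : (fun i => (enorm (x i) / enorm (z i)) *: unitv (x i)) @ \oo --> d.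
        by move/cvE: hh; apply: cv_near; apply: nearW => i; rewrite rE.
      rewrite -[d]scale1r; apply: cvgZ => //.
      apply/cvgrPdist_le => eps eps0.
      apply: filterS (x0' _ eps0) => i; rewrite subr0 => h.
      apply: le_trans h.
      have zi := zn i; have xi := xn i.
      have h1 : enorm (x i) / enorm (z i) <= 1 by rewrite ler_pdivrMr // mul1r.
      have h2 : 1 - enorm (x i) <= enorm (x i) / enorm (z i).
        rewrite ler_pdivlMr //; have := zle i; have := zge i; nra.
      rewrite ger0_norm; lra.
    + move=> eps eps0.
      apply: filterS (x0' _ eps0) => i; rewrite !subr0 => h.
      apply: le_trans h.
      rewrite enormZ ger0_norm ?invr_ge0 ?enorm_ge0 // mulrC ler_pdivrMr //.
      have := yle i; have := zge i; have := xn i; nra.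
pose c i := f (a i) 0.
have cE i : enorm (c i) = enorm (a i) by exact: f_x0.
have [b [Pb [hb _]]] : exists b, (forall i, P (b i)) /\
      negl (fun i => enorm (c i - b i)) (fun i => enorm (c i)) /\
      negl (fun i => enorm (c i - b i)) (fun i => enorm (b i)).
  apply: sP.
  - move=> i; apply/eqP => c0; have := enorm_gt0 (a0 i).
    by rewrite -cE c0 enorm0 ltxx.
  - apply/cvE; rewrite -f00; apply: cv_f; [exact/cvE|exact: cv_const].
  - exists (f d 0); split => //; apply/cvE.
    have uE i : unitv (c i) = f (unitv (a i)) 0.
      by rewrite /unitv fZ cE scaler0.
    have := cv_f ((cvE _ _).1 had) (cv_const 0).
    by apply: cv_near; apply: nearW => i; rewrite uE.
have hd i : exists xy : 'rV_m * 'rV_n, [/\ A xy.1, B xy.2 & b i = f xy.1 xy.2].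
  by have [x1 [y1 [h1 h2 h3]]] := (HP (b i)).1 (Pb i); exists (x1, y1).
have [b12 hb12] := choice hd.
apply: (@Wk _ _ _ a (fun i => (b12 i).1)).
  by move=> i; case: (hb12 i).
move=> eps eps0; apply: filterS (hb _ eps0) => i.
case: (hb12 i) => _ _ ->; rewrite cE fB => h.
exact: le_trans (f_le1 _ _) h.
Qed.

Lemma fwd (A : set 'rV[R]_m) (B : set 'rV[R]_n) (P : set 'rV[R]_p) :
  (forall z, exists xy : 'rV_m * 'rV_n, z = f xy.1 xy.2) ->
  (forall z, P z <-> exists x y, [/\ A x, B y & z = f x y]) ->
  closure A 0 -> closure B 0 -> SSP A -> SSP B -> SSP P.
Proof.
move=> fs HP cA cB sA sB c c0 c00 [d [[z [hz [z0 hzd]]] hcd]].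
have [[d1 d2] /= dE] := fs d.
have [ac acE] := choice (fun i => fs (c i)).
pose a i := (ac i).1; pose a' i := (ac i).2.
have hzd' i : exists xy : 'rV_m * 'rV_n, [/\ A xy.1, B xy.2 & z i = f xy.1 xy.2].
  by have [x1 [y1 [h1 h2 h3]]] := (HP (z i)).1 (proj1 (hz i)); exists (x1, y1).
have [xy xyE] := choice hzd'.
pose x i := (xy i).1; pose y i := (xy i).2.
pose s i := enorm (c i); pose t i := enorm (z i).
have s0 i : 0 < s i by apply: enorm_gt0.
have t0 i : 0 < t i by apply: enorm_gt0; case: (hz i).
have s00 : s @ \oo --> 0 by rewrite -(enorm0 R (p)); apply: cv_enorm; exact/cvE.
have t00 : t @ \oo --> 0 by rewrite -(enorm0 R (p)); apply: cv_enorm; exact/cvE.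
have hc : cv (fun i => f ((s i)^-1 *: a i) ((s i)^-1 *: a' i)) (f d1 d2).
  rewrite -dE; move/cvE: hcd; apply: cv_near; apply: nearW => i.
  by rewrite /unitv -/(s i) {1}(acE i) fZ.
have hz' : cv (fun i => f ((t i)^-1 *: x i) ((t i)^-1 *: y i)) (f d1 d2).
  rewrite -dE; move/cvE: hzd; apply: cv_near; apply: nearW => i.
  by rewrite /unitv -/(t i); case: (xyE i) => _ _ ->; rewrite fZ.
have [b1 [Ab1 hb1]] : exists b, (forall i, A (b i)) /\ negl (fun i => enorm (a i - b i)) s.
  apply: compL => //; first exact: cv_f1 hc.
  move=> d10; apply: (Dlemma (s := t) (x := x)) => //; last exact: cv_f1 hz'.
  by move=> i; case: (xyE i).
have [b2 [Ab2 hb2]] : exists b, (forall i, B (b i)) /\ negl (fun i => enorm (a' i - b i)) s.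
  apply: compL => //; first exact: cv_f2 hc.
  move=> d20; apply: (Dlemma (s := t) (x := y)) => //; last exact: cv_f2 hz'.
  by move=> i; case: (xyE i).
apply: (@Wk _ _ _ c (fun i => f (b1 i) (b2 i))).
  by move=> i; apply/HP; exists (b1 i), (b2 i).
move=> eps eps0.
have e2 : 0 < eps / 2 by rewrite divr_gt0.
apply: filterS2 (hb1 _ e2) (hb2 _ e2) => i h1 h2.
rewrite (acE i) fB -/(a i) -/(a' i).
apply: le_trans (f_ge _ _) _.
have hs : s i = enorm (f (a i) (a' i)) by rewrite /s {1}(acE i).
rewrite -hs; lra.
Qed.

End Pair.

Lemma prodsetP (R : realType) m n (A : set 'rV[R]_m) (B : set 'rV[R]_n) z :
  prodset A B z <-> exists x y, [/\ A x, B y & z = row_mx x y].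
Proof.
split; first by case=> x Ax [y By <-]; exists x, y.
by case=> x [y [Ax By ->]]; exists x => //; exists y.
Qed.

Theorem proposition2p33 (R : realType) (m n : nat)
  (A : set 'rV[R]_m) (B : set 'rV[R]_n) :
  closure A (0 : 'rV[R]_m) -> closure B (0 : 'rV[R]_n) ->
  (SSP A /\ SSP B <-> SSP (prodset A B)).
Proof.
move=> cA cB.
have rB : forall (x : 'rV[R]_m) (y : 'rV[R]_n) x' y',
    row_mx x y - row_mx x' y' = row_mx (x - x') (y - y').
  by move=> x y x' y'; rewrite opp_row_mx add_row_mx.
have rZ : forall c (x : 'rV[R]_m) (y : 'rV[R]_n), c *: row_mx x y = row_mx (c *: x) (c *: y).
  by move=> c x y; rewrite scale_row_mx.
split.
  case=> sA sB.
  have fs : forall z : 'rV[R]_(m + n), exists xy : 'rV_m * 'rV_n, z = row_mx xy.1 xy.2.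
    by move=> z; exists (lsubmx z, rsubmx z); rewrite /= hsubmxK.
  exact: (@fwd R m n (m + n) row_mx rB rZ (fun x y => sq_row x y) A B _ fs
            (prodsetP A B) cA cB sA sB).
move=> sP; split.
  exact: (@back R m n (m + n) row_mx rB rZ (fun x y => sq_row x y) A B _
            (prodsetP A B) cB sP).
have rB' : forall (y : 'rV[R]_n) (x : 'rV[R]_m) y' x',
    row_mx x y - row_mx x' y' = row_mx (x - x') (y - y').
  by move=> y x y' x'; exact: rB.
have rZ' : forall c (y : 'rV[R]_n) (x : 'rV[R]_m), c *: row_mx x y = row_mx (c *: x) (c *: y).
  by move=> c y x; exact: rZ.
have rS : forall (y : 'rV[R]_n) (x : 'rV[R]_m), sq (row_mx x y) = sq y + sq x.
  by move=> y x; rewrite sq_row addrC.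
have HP : forall z, prodset A B z <-> exists y x, [/\ B y, A x & z = row_mx x y].
  move=> z; rewrite prodsetP; split.
    by case=> x [y [Ax By ->]]; exists y, x.
  by case=> y [x [By Ax ->]]; exists x, y.
exact: (@back R n m (m + n) (fun y x => row_mx x y) rB' rZ' rS B A _
            HP cA sP).
Qed.
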